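(* Let $n,m$ be positive integers with $2(m+1)\leq n$ and let $I$ be a non-empty independent set of $C_n^m$. Then $\gamma_{gr}(C_n^m,I)=n-|I|m$ if $|I|\geq 2$, and $\gamma_{gr}(C_n^m,I)=n-2m$ if $|I|=1$.
   Context: $C_n^m$ is the $m$-th power of the cycle $C_n$: vertex set $[n]=\{1,\dots,n\}$ (with addition modulo $n$), two distinct vertices being adjacent iff their distance in the cycle $1,2,\dots,n,1$ is at most $m$. For a sequence $S=(v_1,\dots,v_k)$ of distinct vertices, $\widehat S$ is its set of vertices, $|S|=k$, $PN_S(v_i)=N[v_i]\setminus\bigcup_{j<i}N[v_j]$ ($N[\cdot]$ the closed neighborhood). $S$ is a legal dominating sequence if $\widehat S$ is dominating and each $PN_S(v_i)\ne\emptyset$. For such $S$, the footprinter $f_S(x)$ of $x$ is the unique $v\in\widehat S$ with $x\in PN_S(v)$, and $I_S=\{v:f_S(v)=v\}$. For an independent set $I$, $\gamma_{gr}(G,I)$ is the maximum length of a legal dominating sequence $S$ of $G$ with $I_S=I$ ($-\infty$ if none exists). *)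

(* Defs.v *)
From mathcomp Require Import all_boot.
Set Implicit Arguments. Unset Strict Implicit. Unset Printing Implicit Defensive.

Section Graph.
Variable T : finType.
Variable adj : rel T.

Definition cnbhd (v : T) : {set T} := [set u | (u == v) || adj v u].

(* PN_S(v) when v is preceded in S by the vertices of [prev] *)
Definition PN (v : T) (prev : seq T) : {set T} :=
  cnbhd v :\: \bigcup_(u <- prev) cnbhd u.

Fixpoint legal_from (prev s : seq T) : bool :=
  match s with
  | [::] => true
  | v :: s' => (PN v prev != set0) && legal_from (rcons prev v) s'
  end.

Definition dominating_set (D : {set T}) : bool :=
  \bigcup_(u in D) cnbhd u == [set: T].

Definition legal_dom_seq (S : seq T) : bool :=
  [&& uniq S, dominating_set [set u in S] & legal_from [::] S].

(* footprinter f_S(x): the first v_i in S with x in N[v_i], i.e. the unique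
   v_i with x in PN_S(v_i) (only meaningful when S is dominating) *)
Definition footprinter (S : seq T) (x : T) : T :=
  nth x S (find (fun v => x \in cnbhd v) S).

Definition I_S (S : seq T) : {set T} := [set v | footprinter S v == v].

Definition independent (I : {set T}) : bool :=
  [forall u in I, forall v in I, ~~ adj u v].

Definition has_lds (I : {set T}) (k : nat) : bool :=
  [exists t : k.-tuple T, legal_dom_seq t && (I_S t == I)].

(* gamma_gr(G, I): maximum length of a legal dominating sequence S with
   I_S = I; None encodes -infinity (no such sequence).  Lengths are bounded
   by #|T| since the vertices of S are distinct. *)
Definition gamma_gr (I : {set T}) : option nat :=
  if [exists k : 'I_#|T|.+1, has_lds I k]
  then Some (\max_(k : 'I_#|T|.+1 | has_lds I k) (k : nat))
  else None.
End Graph.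

Definition cyc_dist (n : nat) (i j : 'I_n) : nat :=
  let d := maxn i j - minn i j in minn d (n - d).

Definition cyc_pow_adj (n m : nat) : rel 'I_n :=
  fun i j => (i != j) && (cyc_dist i j <= m).
Arguments cyc_pow_adj : clear implicits.
Arguments cyc_dist : clear implicits.

(* Main.v *)
Require Import Defs.
From mathcomp Require Import all_boot zify.
Set Implicit Arguments. Unset Strict Implicit. Unset Printing Implicit Defensive.

Lemma modn_cases a n : a < n + n -> a %% n = if a < n then a else a - n.
Proof.
move=> H; case: ifP => H1; first by rewrite modn_small.
have -> : a = (a - n) + n by lia.
rewrite modnDr modn_small; lia.
Qed.

Section Cyc.
Variables (n' m : nat).
Local Notation n := n'.+1.
Local Notation adj := (cyc_pow_adj n m).

Definition nb (v : 'I_n) := cnbhd adj v.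
Definition P (b : 'I_n) (j : nat) : 'I_n := inord ((b + j) %% n).
Definition off (b u : 'I_n) : nat := (u + n - b) %% n.
Definition near (x y : nat) : bool :=
  (x <= y + m) && (y <= x + m) || (x + n <= y + m) || (y + n <= x + m).

Lemma PE b j : val (P b j) = (b + j) %% n.
Proof. by rewrite /P /= inordK // ltn_pmod. Qed.

Lemma PP b j k : P (P b j) k = P b (j + k).
Proof. by apply: val_inj; rewrite !PE modnDml addnA. Qed.

Lemma P0 b : P b 0 = b.
Proof. by apply: val_inj; rewrite PE addn0 modn_small. Qed.

Lemma off_lt b u : off b u < n.
Proof. by rewrite /off ltn_pmod. Qed.

Lemma P_off b u : P b (off b u) = u.
Proof.
apply: val_inj; rewrite PE /off modnDmr.
have -> : b + (u + n - b) = u + n by have := ltn_ord b; lia.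
by rewrite modnDr modn_small.
Qed.

Lemma off_P b j : j < n -> off b (P b j) = j.
Proof.
move=> hj; rewrite /off PE.
have hb := ltn_ord b.
rewrite (modn_cases (a := b + j)); last by lia.
case: ifP => h1; rewrite (modn_cases); try lia; case: ifP; lia.
Qed.

Lemma P_inj b j k : j < n -> k < n -> P b j = P b k -> j = k.
Proof. by move=> hj hk e; rewrite -(off_P b hj) -(off_P b hk) e. Qed.

Lemma in_nb u v : (u \in nb v) = (u == v) || (cyc_dist n v u <= m).
Proof.
rewrite /nb /cnbhd inE /cyc_pow_adj.
by case: eqVneq => //= ->; rewrite /cyc_dist maxnn minnn subnn min0n.
Qed.

Lemma nbP b x y : x < n -> y < n -> (P b x \in nb (P b y)) = near x y.
Proof.
move=> hx hy; rewrite in_nb.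
case: eqVneq => [/P_inj e|ne] /=.
  by rewrite (e hx hy) /near leq_addr.
have hb := ltn_ord b.
rewrite /cyc_dist !PE (modn_cases (a := b + x)); last by lia.
rewrite (modn_cases (a := b + y)); last by lia.
case: ifP => h1; case: ifP => h2; apply/idP/idP; rewrite /near; lia.
Qed.

Hypothesis hm : 0 < m.
Hypothesis hn : 2 * (m + 1) <= n.

Definition sc (x : 'I_n) := P x 1.
Definition RE (D : {set 'I_n}) := [set x | (x \in D) && (sc x \notin D)].
Definition Dom (s : seq 'I_n) := \bigcup_(u <- s) nb u.

Lemma memDom x s : (x \in Dom s) = has (fun u => x \in nb u) s.
Proof.
elim: s => [|u s IH]; first by rewrite /Dom big_nil inE.
by rewrite /Dom big_cons inE -/(Dom s) IH.
Qed.

Lemma sc_P b j : sc (P b j) = P b j.+1.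
Proof. by rewrite /sc PP addn1. Qed.

Lemma Pm v : P (P v (n - m)) m = v.
Proof.
rewrite PP subnK; last by lia.
by apply: val_inj; rewrite PE modnDr modn_small.
Qed.

Lemma nb_off b u : (u \in nb (P b m)) = (off b u <= 2 * m).
Proof.
rewrite -{1}(P_off b u) nbP ?off_lt //; last by lia.
have := off_lt b u; rewrite /near; move=> h; apply/idP/idP; lia.
Qed.

Lemma walk (D : {set 'I_n}) b lo hi : P b hi \notin D ->
  (forall j, lo <= j < hi -> P b j \notin RE D) ->
  forall j, lo <= j <= hi -> P b j \notin D.
Proof.
move=> hhi hre j /andP[hlo hjh].
have: forall k, k <= hi - lo -> P b (hi - k) \notin D.
  elim=> [|k IH] hk; first by rewrite subn0.
  have := hre (hi - k.+1); rewrite inE negb_and negbK.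
  have -> : (hi - k.+1).+1 = hi - k by lia.
  rewrite sc_P; have -> : (hi - k.+1).+1 = hi - k by lia.
  rewrite (negbTE (IH _)); last by lia.
  rewrite orbF; apply; lia.
move=> /(_ (hi - j)); have -> : hi - (hi - j) = j by lia.
apply; lia.
Qed.

Lemma card_run (A : {set 'I_n}) b lo len : lo + len <= n ->
  (forall j, lo <= j < lo + len -> P b j \in A) -> len <= #|A|.
Proof.
move=> hl hA.
set s := [seq P b j | j <- iota lo len].
have us : uniq s.
  rewrite map_inj_in_uniq ?iota_uniq // => x y; rewrite !mem_iota => hx hy.
  apply: P_inj; lia.
have <- : size s = len by rewrite size_map size_iota.
rewrite -(card_uniqP us); apply: subset_leq_card; apply/subsetP => x /mapP[j].
by rewrite mem_iota => hj ->; apply: hA.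
Qed.

Lemma noR (D : {set 'I_n}) b lo : ~~ [exists j : 'I_m, P b (lo + j) \in RE D] ->
    forall j, lo <= j < lo + m -> P b j \notin RE D.
Proof.
move=> hR j hj; apply/negP => hin; move/existsP: hR; apply.
have hjm : j - lo < m by clear -hj; lia.
by exists (Ordinal hjm) => /=; rewrite subnKC //; case/andP: hj.
Qed.

Lemma ar_h3 m0 i c e d : c <= d + e -> m0 * (i + c) <= m0 * (i + e) + m0 * d.
Proof. by move=> h; rewrite -mulnDr leq_mul2l; apply/orP; right; lia. Qed.

Lemma ar_fin m0 i c' e d r p c : r + d = c -> c' <= d + e ->
  m0 * (i + e) + 1 <= m0 * r + p -> m0 * (i + c') + 1 <= m0 * c + p.
Proof.
move=> h1 h2 h3; have := ar_h3 m0 i h2; rewrite -h1 mulnDr; lia.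
Qed.

Lemma step (D : {set 'I_n}) v : nb v :\: D != set0 ->
  m * ((v \notin D) + #|RE (D :|: nb v)|) + 1 <= m * #|RE D| + #|nb v :\: D|.
Proof.
move=> hPN.
have hm2 : m <= 2 * m by clear; lia.
set b := P v (n - m).
have Ev : v = P b m by rewrite Pm.
have nbQ z : z < n -> (P b z \in nb v) = (z <= 2 * m).
  by move=> hz; rewrite Ev nb_off off_P.
set W := [set x | off b x < 2 * m].
set e := (P b (2 * m) \notin D) && (P b (2 * m).+1 \notin D).
have sub : RE (D :|: nb v) \subset (RE D :\: W) :|: (if e then [set P b (2 * m)] else set0).
  apply/subsetP => x; rewrite inE => /andP[hx hsx].
  have Ex : x = P b (off b x) by rewrite P_off.
  have ho := off_lt b x.
  have hW : ~~ (off b x < 2 * m).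
    apply/negP => hlt; move: hsx; rewrite {1}Ex sc_P in_setU nbQ; last by lia.
    by rewrite hlt orbT.
  rewrite in_setU in_setD inE hW /=.
  case hxD : (x \in D) => /=.
    by move: hsx; rewrite in_setU negb_or => /andP[h1 _]; rewrite /RE in_set hxD h1.
  rewrite /RE in_set hxD /=.
  move: hx; rewrite in_setU hxD /= Ev nb_off => h2.
  have e2 : off b x = 2 * m by lia.
  have he : e.
    apply/andP; split; first by rewrite -e2 -Ex hxD.
    by move: hsx; rewrite {1}Ex sc_P e2 in_setU negb_or => /andP[].
  by rewrite he inE {1}Ex e2.
have hc1 : #|RE (D :|: nb v)| <= #|RE D :\: W| + e.
  apply: (leq_trans (subset_leq_card sub)); apply: (leq_trans (leq_card_setU _ _)).
  by rewrite leq_add2l; case: (e); rewrite ?cards1 ?cards0.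
have hc2 := cardsID W (RE D).
set r := #|RE D :&: W| in hc2 *.
set p := #|nb v :\: D|.
have hp1 : 0 < p by rewrite card_gt0.
have hrun : forall lo hi, hi <= 2 * m -> (forall j, lo <= j <= hi -> P b j \notin D) ->
    hi.+1 - lo <= p.
  move=> lo hi hhi hj; rewrite /p; case: (leqP lo hi) => hlh; last by lia.
  apply: (card_run (b := b) (lo := lo)); first by lia.
  move=> j hj2; rewrite inE hj /=; last by lia.
  by rewrite nbQ; lia.
have inRW : forall j, j < 2 * m -> P b j \in RE D -> P b j \in RE D :&: W.
  by move=> j hj hR; rewrite inE hR inE off_P //; lia.
have r1 : forall j, j < 2 * m -> P b j \in RE D -> 0 < r.
  by move=> j hj hR; apply/card_gt0P; exists (P b j); apply: inRW.
have walkL : v \notin D -> ~~ [exists j : 'I_m, P b (0 + j) \in RE D] ->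
    forall j, j <= m -> P b j \notin D.
  move=> hv hRL j hj; apply: (walk (lo := 0) (hi := m)); first by rewrite -Ev.
    by move=> k hk; apply: (noR hRL); rewrite add0n.
  by rewrite hj.
have walkR : e -> ~~ [exists j : 'I_m, P b (m + j) \in RE D] ->
    forall j, m <= j <= 2 * m -> P b j \notin D.
  move=> /andP[he _] hRR j hj; apply: (walk (lo := m) (hi := 2 * m)) => //.
  by move=> k hk; apply: (noR hRR); rewrite addnn -mul2n.
have key : m * ((v \notin D) + e) + 1 <= m * r + p.
  case: (boolP [exists j : 'I_m, P b (0 + j) \in RE D]) => [/existsP[j1 hj1]|hRL];
  case: (boolP [exists j : 'I_m, P b (m + j) \in RE D]) => [/existsP[j2 hj2]|hRR].
  - have hr : 2 <= r.
      have ne : P b j1 != P b (m + j2).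
        have h1 := ltn_ord j1; have h2 := ltn_ord j2.
        apply/eqP => h; have : (j1 : nat) = m + j2.
          by apply: (P_inj (b := b)) => //; clear -h1 h2 hn; lia.
        clear -h1 h2; lia.
      have sub2 : [set P b j1; P b (m + j2)] \subset RE D :&: W.
        apply/subsetP => x /set2P[] ->; apply: inRW => //;
        have := ltn_ord j1; have := ltn_ord j2; clear; lia.
      by have := subset_leq_card sub2; rewrite cards2 ne.
    have : 2 * m <= m * r by rewrite mulnC leq_mul2l hr orbT.
    by case: (v \notin D); case: (e) => /=; clear -hp1; lia.
  - have hr : 0 < r by apply: (r1 j1); [have := ltn_ord j1; clear; lia | rewrite add0n in hj1].
    have hmr : m <= m * r by rewrite leq_pmulr.
    case hv : (v \notin D); case he : e => /=.
    + have := hrun m (2 * m) (leqnn _) (walkR he hRR); clear -hmr hp1; lia.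
    + clear -hmr hp1; lia.
    + by move: hv; rewrite Ev (negbTE (walkR he hRR m _)) //; clear; lia.
    + clear -hmr hp1; lia.
  - have hr : 0 < r by apply: (r1 (m + j2)); [have := ltn_ord j2; clear; lia | done].
    have hmr : m <= m * r by rewrite leq_pmulr.
    case hv : (v \notin D); case he : e => /=.
    + have := hrun 0 m hm2 (walkL hv hRL); clear -hmr hp1; lia.
    + have := hrun 0 m hm2 (walkL hv hRL); clear -hmr hp1; lia.
    + clear -hmr hp1; lia.
    + clear -hmr hp1; lia.
  - case hv : (v \notin D); case he : e => /=.
    + have : forall j, 0 <= j <= 2 * m -> P b j \notin D.
        move=> j hj; case: (leqP j m) => hjm; first by apply: walkL.
        by apply: walkR => //; rewrite (ltnW hjm) /=; case/andP: hj.
      move=> /(hrun 0 (2 * m) (leqnn _)); clear -hp1; lia.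
    + have := hrun 0 m hm2 (walkL hv hRL); clear -hp1; lia.
    + by move: hv; rewrite Ev (negbTE (walkR he hRR m _)) //; clear; lia.
    + clear -hp1; lia.
exact: (ar_fin hc2 hc1 key).
Qed.

Definition kI (p : seq 'I_n) := count (fun v => v \notin Dom (take (index v p) p)) p.

Lemma kI_rcons p v : v \notin p -> kI (rcons p v) = kI p + (v \notin Dom p).
Proof.
move=> hv; rewrite /kI -cats1 count_cat /= addn0; congr (_ + _).
  apply: eq_in_count => u hu /=.
  by rewrite index_cat hu take_cat index_mem hu.
by rewrite index_cat (negbTE hv) /= eqxx addn0 take_cat ltnn subnn take0 cats0.
Qed.

Lemma Dom_rcons p v : Dom (rcons p v) = Dom p :|: nb v.
Proof.
by apply/setP => x; rewrite in_setU !memDom -cats1 has_cat /= orbF.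
Qed.

Lemma legal_rcons prev s v : legal_from adj prev (rcons s v) =
  legal_from adj prev s && (PN adj v (prev ++ s) != set0).
Proof.
elim: s prev => [|u s IH] prev /=; first by rewrite cats0 andbT.
by rewrite IH -cats1 -catA cat1s andbA.
Qed.

Lemma RE0 : RE set0 = set0.
Proof. by apply/setP => x; rewrite !inE. Qed.

Lemma RET : RE setT = set0.
Proof. by apply/setP => x; rewrite !inE. Qed.

Lemma RE_nonempty (D : {set 'I_n}) : D != set0 -> D != setT -> RE D != set0.
Proof.
case/set0Pn => x hx hT; apply/negP => /eqP h0.
have cl y : y \in D -> sc y \in D.
  move=> hy; apply/negPn/negP => hs.
  have : y \in RE D by rewrite inE hy hs.
  by rewrite h0 inE.
have hall j : P x j \in D.
  by elim: j => [|j IH]; [rewrite P0 | rewrite -sc_P; apply: cl].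
move/negP: hT; apply; apply/eqP/setP => y; rewrite inE -(P_off x y); exact: hall.
Qed.

Lemma card_split (D N : {set 'I_n}) : #|D :|: N| = #|D| + #|N :\: D|.
Proof.
by rewrite -(cardsID D (D :|: N)) setUK setDUl setDv set0U.
Qed.

Lemma Dom_nil : Dom [::] = set0.
Proof. by apply/setP => x; rewrite memDom inE. Qed.

Lemma inv p : uniq p -> legal_from adj [::] p ->
  m * (kI p + #|RE (Dom p)|) + size p <= #|Dom p|.
Proof.
elim/last_ind: p => [|p v IH].
  by move=> _ _; rewrite Dom_nil RE0 cards0 /kI /= muln0.

rewrite rcons_uniq legal_rcons => /andP[hv hu] /andP[hl hPN].
have := IH hu hl => {IH}.
have hPN' : nb v :\: Dom p != set0 by [].
have st := step hPN'.
rewrite kI_rcons // Dom_rcons card_split size_rcons.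
rewrite !mulnDr in st *; move: st; set q1 := m * (v \notin Dom p); set q2 := m * #|RE (Dom p :|: nb v)|; set q3 := m * #|RE (Dom p)|; set q4 := m * kI p. set q5 := #|Dom p|. clearbody q1 q2 q3 q4 q5. move: (#|nb v :\: Dom p|) => z. lia.
Qed.

Lemma IS_char S : uniq S -> (forall x, x \in Dom S) ->
  I_S adj S = [set v | (v \in S) && (v \notin Dom (take (index v S) S))].
Proof.
move=> hu DS; apply/setP => x; rewrite !inE /footprinter.
have ha : has (fun v => x \in cnbhd adj v) S by have := DS x; rewrite memDom.
have hf := ha; rewrite has_find in hf.
case hxS : (x \in S) => /=; last first.
  apply/negbTE/eqP => e; move: (mem_nth x hf); rewrite e hxS //.
have hi : index x S < size S by rewrite index_mem.
have hfi : find (fun v => x \in cnbhd adj v) S <= index x S.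
  rewrite leqNgt; apply/negP => /(before_find x); rewrite nth_index //.
  by rewrite /cnbhd inE eqxx.
rewrite -[X in _ == X](nth_index x hxS) nth_uniq // memDom has_take_leq ?(ltnW hi) //.
by rewrite -leqNgt eqn_leq hfi.
Qed.

Lemma card_filter_set (S : seq 'I_n) (Pr : pred 'I_n) : uniq S ->
  #|[set v | (v \in S) && Pr v]| = count Pr S.
Proof.
move=> u; rewrite -size_filter -(card_uniqP (filter_uniq Pr u)).
by apply: eq_card => x; rewrite inE mem_filter andbC.
Qed.

Lemma upper S : legal_dom_seq adj S ->
  m * #|I_S adj S| + size S <= n /\ 2 * m + size S <= n.
Proof.
case/and3P => hu hdom hl.
have DS : forall x, x \in Dom S.
  move/eqP: hdom => hdom x; have : x \in [set: 'I_n] by rewrite inE.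
  rewrite -hdom => /bigcupP[u hu' hx]; rewrite memDom; apply/hasP; exists u => //.
  by rewrite inE in hu'.
have cardDS : #|Dom S| = n.
  have -> : Dom S = setT by apply/setP => x; rewrite inE DS.
  by rewrite cardsT card_ord.
rewrite (IS_char hu DS) card_filter_set // -/(kI S).
move: hu hl DS cardDS; clear hdom; case/lastP: S => [|p v].
  by move=> _ _ /(_ ord0); rewrite Dom_nil inE.
rewrite rcons_uniq legal_rcons => /andP[hv hup] /andP[hlp hPN] DS cardDS.
have hPN' : nb v :\: Dom p != set0 by [].
have := inv hup hlp; rewrite kI_rcons // size_rcons.
rewrite Dom_rcons card_split in cardDS.
have hp : p != [::].
  apply/eqP => p0; subst p.
  set b := P v (n - m).
  have := DS (P b (2 * m).+1); rewrite Dom_rcons Dom_nil set0U.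
  rewrite -{1}(Pm v) -/b nb_off off_P; last by clear -hn; lia.
  by clear; lia.
have [u [p' pE]] : exists u p', p = u :: p'.
  by destruct p as [|u p']; [ | exists u, p'].
have k1 : 0 < kI p.
  by rewrite pE /kI /= eqxx take0 Dom_nil inE.
have c1 : 0 < #|RE (Dom p)|.
  rewrite card_gt0; apply: RE_nonempty.
    apply/set0Pn; exists u.
    by rewrite pE memDom /= /nb /cnbhd inE eqxx.
  apply/negP => /eqP eT; move: hPN'; rewrite eT setDT eqxx //.
have pn1 : 0 < #|nb v :\: Dom p| by rewrite card_gt0.
have h1 : m * (kI p + (v \notin Dom p)) <= m * (kI p + #|RE (Dom p)|).
  by rewrite leq_mul2l leq_add2l; case: (v \notin Dom p); rewrite ?c1 ?orbT.
have h2 : 2 * m <= m * (kI p + #|RE (Dom p)|).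
  by rewrite mulnC leq_mul2l; apply/orP; right; clear -k1 c1; lia.
move: h1 h2 cardDS pn1.
set q1 := m * (kI p + (v \notin Dom p)).
set q2 := m * (kI p + #|RE (Dom p)|).
set z := #|nb v :\: Dom p|.
set z2 := #|Dom p|.
set sp := size p.
clearbody q1 q2 z z2 sp => h1 h2 h3 h4 h5.
clear -h1 h2 h3 h4 h5; split; lia.
Qed.

Lemma iota_split t k : t < k -> iota 0 k = iota 0 t ++ t :: iota t.+1 (k - t.+1).
Proof.
move=> h; rewrite -{1}(subnKC (ltnW h)) iotaD add0n.
by rewrite -(subnSK h).
Qed.

Section Gen.
Variables (f : nat -> 'I_n) (pl : pred nat).

Definition pre t := [seq f u | u <- iota 0 t & pl u].

Lemma pre_S t : pre t.+1 = pre t ++ (if pl t then [:: f t] else [::]).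
Proof.
rewrite /pre (_ : t.+1 = t + 1); last by rewrite addn1.
by rewrite iotaD filter_cat map_cat /=; case: (pl t).
Qed.

Lemma memDom_pre y t :
  reflect (exists2 u, u < t & pl u && (y \in nb (f u))) (y \in Dom (pre t)).
Proof.
rewrite memDom has_map; apply: (iffP hasP) => [[u]|[u hu /andP[h1 h2]]].
  by rewrite mem_filter mem_iota /= => /andP[h1 h2] h3; exists u => //; rewrite h1 h3.
by exists u => //; rewrite mem_filter mem_iota h1.
Qed.

Hypothesis finj : forall t1 t2, t1 < n -> t2 < n -> pl t1 -> pl t2 -> f t1 = f t2 -> t1 = t2.
Hypothesis fpriv : forall t, t < n -> pl t -> exists2 y, y \in nb (f t) & y \notin Dom (pre t).

Lemma legal_pre k : k <= n -> legal_from adj [::] (pre k).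
Proof.
elim: k => [|k IH] hk; first by [].
rewrite pre_S; case hpk : (pl k); last by rewrite cats0; apply: IH; lia.
rewrite cats1 legal_rcons IH /=; last by lia.
have [y hy hy2] := fpriv hk hpk.
by apply/set0Pn; exists y; rewrite inE hy2 hy.
Qed.

Lemma uniq_pre : uniq (pre n).
Proof.
rewrite map_inj_in_uniq ?filter_uniq ?iota_uniq // => x y.
rewrite !mem_filter !mem_iota /= => /andP[h1 h2] /andP[h3 h4].
by apply: finj.
Qed.

Lemma take_pre t : t < n -> pl t -> take (index (f t) (pre n)) (pre n) = pre t.
Proof.
move=> ht hp.
have -> : pre n = pre t ++ f t :: [seq f u | u <- iota t.+1 (n - t.+1) & pl u].
  by rewrite /pre (iota_split ht) filter_cat map_cat /= hp.
have hnt : f t \notin pre t.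
  apply/mapP => [[u]]; rewrite mem_filter mem_iota /= => /andP[h1 h2] e.
  have := finj (ltn_trans h2 ht) ht h1 hp (esym e); rewrite add0n in h2; lia.
by rewrite index_cat (negbTE hnt) /= eqxx addn0 take_size_cat.
Qed.

Variable I : {set 'I_n}.
Hypothesis fisI : forall t, t < n -> pl t -> (f t \in I) = (f t \notin Dom (pre t)).
Hypothesis fcov : forall y, exists2 t, t < n & pl t && (y \in nb (f t)).
Hypothesis fsub : forall v, v \in I -> exists2 t, t < n & pl t && (f t == v).

Lemma memS v : reflect (exists2 t, t < n & pl t && (f t == v)) (v \in pre n).
Proof.
apply: (iffP mapP) => [[t]|[t ht /andP[h1 /eqP <-]]].
  by rewrite mem_filter mem_iota /= => /andP[h1 h2] ->; exists t => //; rewrite h1 eqxx.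
by exists t => //; rewrite mem_filter mem_iota h1.
Qed.

Lemma DomS y : y \in Dom (pre n).
Proof. by have [t ht /andP[h1 h2]] := fcov y; apply/memDom_pre; exists t => //; rewrite h1. Qed.

Lemma gen_lds : legal_dom_seq adj (pre n) /\ I_S adj (pre n) = I.
Proof.
split.
  rewrite /legal_dom_seq uniq_pre legal_pre // andbT /=.
  apply/eqP/setP => y; rewrite inE; apply/bigcupP.
  have [t ht /andP[h1 h2]] := fcov y; exists (f t) => //.
  by rewrite inE; apply/memS; exists t => //; rewrite h1 eqxx.
rewrite (IS_char uniq_pre DomS); apply/setP => v; rewrite inE.
case: memS => [[t ht /andP[h1 /eqP <-]]|hv] /=.
  by rewrite take_pre // fisI.
apply/esym/negP => hvI; apply: hv; exact: fsub.
Qed.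
End Gen.

Section Cons.
Variables (I : {set 'I_n}) (a : 'I_n) (K : nat).
Hypothesis haI : a \in I.
Hypothesis hind : independent adj I.
Hypothesis hKn : K < n.
Hypothesis hKI : P a K \in I.
Hypothesis hKmax : forall o, o < n -> P a o \in I -> o <= K.

Definition isI o := (o < n) && (P a o \in I).
Definition M := maxn K m.
Definition L := n - m - 1 - M.
Definition played o := [|| o == 0, M + m < o |
  (o <= K) && ~~ [exists a' : 'I_n, isI a' && (o < a' <= o + m)]].
Definition pos t := if t == 0 then 0 else if t <= L then n - t else t - L.
Definition fc t := P a (pos t).
Definition plc t := played (pos t).

Lemma indep x y : isI x -> isI y -> x != y -> ~~ near x y.
Proof.
move=> /andP[hx hxI] /andP[hy hyI] ne.
rewrite -(nbP a) // in_nb.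
have ne' : P a x != P a y by apply/eqP => /P_inj; move/eqP: ne; auto.
rewrite (negbTE ne') /=.
move/forallP: hind => /(_ (P a y)); rewrite hyI /= => /forallP /(_ (P a x)).
by rewrite hxI /= /cyc_pow_adj eq_sym ne'.
Qed.

Lemma isI0 : isI 0.
Proof. by rewrite /isI P0 haI. Qed.

Lemma isI_far o : isI o -> o != 0 -> m < o /\ o + m < n.
Proof.
move=> ho ne; have := indep ho isI0 ne; rewrite /near => h.
clear -h; split; lia.
Qed.

Lemma isI_le o : isI o -> o <= K.
Proof. by case/andP=> h1 h2; apply: hKmax. Qed.

Lemma isIK : isI K.
Proof. by rewrite /isI hKn hKI. Qed.

Lemma K_cases : K = 0 \/ (m < K /\ K + m < n).
Proof.
case: (eqVneq K 0) => [->|ne]; first by left.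
by right; apply: isI_far => //; exact: isIK.
Qed.

Lemma hMm : M + m < n.
Proof. rewrite /M; case: K_cases => [->|[h1 h2]]; [clear -hn; lia | clear -hn h1 h2; lia]. Qed.

Lemma played_isI o : isI o -> played o.
Proof.
move=> ho; rewrite /played; case: eqVneq => //= ne.
rewrite isI_le //=; apply/orP; right.
apply/negP => /existsP[a' /andP[ha' hr]].
have ne' : o != a' by apply/eqP => e; move: hr; rewrite e; clear; lia.
have := indep ho ha' ne'; rewrite /near; clear -hr; lia.
Qed.

Lemma played_inv o : played o ->
  o = 0 \/ M + m < o \/ (o <= K /\ forall a', isI a' -> ~~ (o < a' <= o + m)).
Proof.
rewrite /played => /or3P[/eqP->|->|/andP[h1 h2]]; [by left|by right; left|].
right; right; split => // a' ha'; apply/negP => hr.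
move/existsP: h2; apply.
have ha'n : a' < n by case/andP: ha'.
by exists (Ordinal ha'n); rewrite /= ha' hr.
Qed.

Lemma pos_cases u : u < n ->
  (u = 0 /\ pos u = 0) \/ (1 <= u <= L /\ pos u = n - u) \/ (L < u /\ pos u = u - L).
Proof.
move=> hu; rewrite /pos; case: eqVneq => [->|ne]; first by left.
case: ifP => h; right; [left|right]; split => //; clear -ne h; lia.
Qed.

Lemma hL : L + M + m + 1 = n.
Proof. have := hMm; rewrite /L; clear; lia. Qed.

Lemma KM : K <= M /\ m <= M.
Proof. by rewrite /M leq_maxl leq_maxr. Qed.

Lemma undom_I t u : t < n -> isI (pos t) -> u < t -> plc u -> ~~ near (pos t) (pos u).
Proof.
move=> ht hI hut hpu.
have hK := isI_le hI; have hL := hL; have [hKM hmM] := KM.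
have hun : u < n by apply: ltn_trans ht.
case: (pos_cases ht) => [[t0 pt]|[[ht1 pt]|[ht1 pt]]].
- by move: hut; rewrite t0.
- by move: hK; rewrite pt; clear -ht1 hL hKM; lia.
have [hf1 hf2] : m < pos t /\ pos t + m < n.
  by apply: isI_far => //; rewrite pt; clear -ht1; lia.
rewrite /near.
case: (pos_cases hun) => [[u0 pu]|[[hu1 pu]|[hu1 pu]]]; rewrite pu.
- clear -hf1 hf2; lia.
- clear -hu1 pt ht1 hf1 hf2 hL hK hKM hmM; lia.
case: (played_inv hpu) => [h|[h|[_ h]]].
- by move: h; rewrite pu; clear -hu1; lia.
- by move: h; rewrite pu; clear -hu1 hut pt hK hKM; lia.
have := h _ hI; rewrite pu pt; clear -hut hu1 ht1 hf1 hf2 pt; lia.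
Qed.

Lemma undom_desc t u : 1 <= t <= L -> u < t -> ~~ near (pos t - m) (pos u).
Proof.
move=> ht hut.
have hL := hL; have [hKM hmM] := KM.
have ht' : t < n by clear -ht hL; lia.
have hun : u < n by apply: ltn_trans ht'.
case: (pos_cases ht') => [[t0 pt]|[[ht1 pt]|[ht1 pt]]];
  [by move: ht; rewrite t0 | | by move: ht ht1; clear; lia].
rewrite /near pt.
case: (pos_cases hun) => [[u0 pu]|[[hu1 pu]|[hu1 pu]]]; rewrite pu.
- clear -ht hL hmM; lia.
- clear -ht hut hL hmM hu1; lia.
- clear -ht hut hu1; lia.
Qed.

Lemma asc_info t : L < t -> t < n -> plc t -> ~~ isI (pos t) ->
  pos t = t - L /\ 1 <= pos t /\ pos t + m < K /\ m < K /\ K + m < n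
  /\ (forall a', isI a' -> ~~ (pos t < a' <= pos t + m)).
Proof.
move=> hLt ht hp hnI.
have hL := hL; have [hKM hmM] := KM.
have pt : pos t = t - L.
  case: (pos_cases ht) => [[t0 pt]|[[ht1 pt]|[ht1 pt]]] //.
    by move: hLt; rewrite t0.
  by move: hLt ht1; clear; lia.
have hKK := isIK.
case: (played_inv hp) => [h|[h|[h1 h2]]].
- by move: h; rewrite pt; clear -hLt; lia.
- by move: h; rewrite pt; clear -hLt ht hL; lia.
have hne : pos t != K by apply/eqP => e; move: hnI; rewrite e hKK.
have := h2 _ hKK => h3.
have hK0 : K != 0 by apply/eqP => e; move: h1 hne; rewrite e pt; clear -hLt; lia.
have [hf1 hf2] := isI_far hKK hK0.
split => //; split; first by rewrite pt; clear -hLt; lia.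
split; first by clear -h1 hne h3; lia.
by split.
Qed.

Lemma undom_asc t u : L < t -> t < n -> plc t -> ~~ isI (pos t) -> u < t ->
  ~~ near (pos t + m) (pos u).
Proof.
move=> hLt ht hp hnI hut.
have hL := hL; have [hKM hmM] := KM.
have [pt [h1 [h2 [h3 [h4 _]]]]] := asc_info hLt ht hp hnI.
have hun : u < n by apply: ltn_trans ht.
rewrite /near.
case: (pos_cases hun) => [[u0 pu]|[[hu1 pu]|[hu1 pu]]]; rewrite pu.
- clear -h1 h2 h3 h4; lia.
- clear -hu1 h1 h2 h3 h4 hL hKM; lia.
- clear -hu1 hut pt h1 h2 h3 h4; lia.
Qed.

Lemma pos0 : pos 0 = 0.
Proof. by []. Qed.

Lemma pl0 : plc 0.
Proof. by rewrite /plc pos0 /played eqxx. Qed.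

Lemma pos_lt t : t < n -> pos t < n.
Proof.
move=> ht; have hL := hL.
case: (pos_cases ht) => [[_ ->]|[[h ->]|[h ->]]]; [clear; lia | clear -ht h; lia | clear -ht h; lia].
Qed.

Lemma dom_nonI t : t < n -> plc t -> ~~ isI (pos t) ->
  exists2 u, u < t & plc u && near (pos t) (pos u).
Proof.
move=> ht hp hnI.
have hL := hL; have [hKM hmM] := KM.
case: (pos_cases ht) => [[t0 pt]|[[ht1 pt]|[ht1 pt]]].
- by move: hnI; rewrite pt isI0.
- case: (eqVneq t 1) => [t1|tn1].
    exists 0; first by rewrite t1.
    rewrite pl0 pos0 pt t1 /near /=; clear -hn hm; lia.
  have hu : 1 <= t - 1 <= L by clear -ht1 tn1; lia.
  have pu : pos (t - 1) = n - (t - 1).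
    have htn : t - 1 < n by clear -ht; lia.
    case: (pos_cases htn) => [[e _]|[[_ ->]|[e _]]] //; clear -hu e; lia.
  exists (t - 1); first by clear -ht1; lia.
  rewrite /plc pu pt /played /near; apply/andP; split.
    apply/orP; right; apply/orP; left; clear -hu hL; lia.
  clear -hu ht1 hL hm; lia.
- have [pt' [h1 [h2 [h3 [h4 h5]]]]] := asc_info ht1 ht hp hnI.
  case: (eqVneq (pos t) 1) => [p1|pn1].
    exists 0; first by clear -ht1; lia.
    by rewrite pl0 pos0 p1 /near; clear -hm; lia.
  have pu : pos (t - 1) = pos t - 1.
    have htn : t - 1 < n by clear -ht; lia.
    case: (pos_cases htn) => [[e _]|[[e _]|[_ ->]]].
    + by move: pn1; rewrite pt; clear -e ht1; lia.
    + by move: pn1; rewrite pt; clear -e ht1; lia.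
    + by rewrite pt; clear; lia.
  exists (t - 1); first by clear -ht1; lia.
  rewrite /plc pu /played /near; apply/andP; split; last by clear -h1 hm; lia.
  apply/orP; right; apply/orP; right; apply/andP; split; first by clear -h2 h1; lia.
  apply/negP => /existsP[a' /andP[ha' hr]].
  case: (eqVneq (a' : nat) (pos t)) => [e|ne].
    by move: hnI; rewrite -e ha'.
  have := h5 _ ha'; clear -hr ne h1; lia.
Qed.

Lemma notdom z t : z < n -> t <= n -> (forall u, u < t -> plc u -> ~~ near z (pos u)) ->
  P a z \notin Dom (pre fc plc t).
Proof.
move=> hz htn h; apply/memDom_pre => [[u hu /andP[h1 h2]]].
have hun : u < n by apply: leq_trans hu htn.
by move: h2; rewrite /fc nbP ?pos_lt // (negbTE (h u hu h1)).
Qed.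

Lemma isdom z t u : z < n -> u < t -> t <= n -> plc u -> near z (pos u) ->
  P a z \in Dom (pre fc plc t).
Proof.
move=> hz hu htn h1 h2; have hun : u < n by apply: leq_trans hu htn.
by apply/memDom_pre; exists u => //; rewrite h1 /fc nbP ?pos_lt.
Qed.

Lemma fcI t : t < n -> (fc t \in I) = isI (pos t).
Proof. by move=> ht; rewrite /isI pos_lt. Qed.

Lemma c_finj t1 t2 : t1 < n -> t2 < n -> plc t1 -> plc t2 -> fc t1 = fc t2 -> t1 = t2.
Proof.
move=> h1 h2 _ _ /P_inj e; have {}e := e (pos_lt h1) (pos_lt h2).
have hL := hL.
case: (pos_cases h1) => [[a1 b1]|[[a1 b1]|[a1 b1]]];
case: (pos_cases h2) => [[a2 b2]|[[a2 b2]|[a2 b2]]]; move: e; rewrite b1 b2;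
clear -a1 a2 h1 h2 hL; lia.
Qed.

Lemma c_fisI t : t < n -> plc t -> (fc t \in I) = (fc t \notin Dom (pre fc plc t)).
Proof.
move=> ht hp; rewrite fcI //.
case hI : (isI (pos t)).
  by rewrite /fc notdom ?pos_lt ?(ltnW ht) // => u hu hpu; apply: undom_I.
have [u hu /andP[h1 h2]] := dom_nonI ht hp (negbT hI).
by rewrite /fc (isdom (pos_lt ht) hu (ltnW ht) h1 h2).
Qed.

Lemma c_fpriv t : t < n -> plc t -> exists2 y, y \in nb (fc t) & y \notin Dom (pre fc plc t).
Proof.
move=> ht hp; have hL := hL; have [hKM hmM] := KM.
case hI : (isI (pos t)).
  exists (fc t); first by rewrite in_nb eqxx.
  by rewrite /fc notdom ?pos_lt ?(ltnW ht) // => u hu hpu; apply: undom_I.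
case: (pos_cases ht) => [[t0 pt]|[[ht1 pt]|[ht1 pt]]].
- by move: hI; rewrite pt isI0.
- have hz1 : pos t - m < n by rewrite pt; clear -ht ht1; lia.
  exists (P a (pos t - m)).
    rewrite /fc nbP ?pos_lt //.
    by rewrite /near pt; clear -ht1 hL hmM; lia.
  by rewrite notdom // ?(ltnW ht) // => u hu _; apply: undom_desc.
- have [pt' [h1 [h2 [h3 [h4 h5]]]]] := asc_info ht1 ht hp (negbT hI).
  have hz1 : pos t + m < n by clear -h2 h4; lia.
  exists (P a (pos t + m)).
    rewrite /fc nbP ?pos_lt //.
    by rewrite /near; clear; lia.
  by rewrite notdom // ?(ltnW ht) // => u hu _; apply: undom_asc => //; rewrite hI.
Qed.

Lemma c_fcov y : exists2 t, t < n & plc t && (y \in nb (fc t)).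
Proof.
have hL := hL; have [hKM hmM] := KM.
set z := off a y; have hz : z < n by apply: off_lt.
have Ey : y = P a z by rewrite P_off.
case: (leqP z m) => hzm.
  exists 0 => //; rewrite pl0 /fc pos0 Ey nbP // /near; clear -hzm; lia.
case: (ltnP M z) => hMz.
  case: (leqP n (z + m)) => hzn.
    exists 0 => //; rewrite pl0 /fc pos0 Ey nbP // /near; clear -hzn; lia.
  have ht : 1 <= n - (z + m) <= L by clear -hMz hzn hL; lia.
  have pt : pos (n - (z + m)) = z + m.
    rewrite /pos; case: eqVneq => [e|_]; first by move: ht; rewrite e.
    have ht2 : n - (z + m) <= L by case/andP: ht.
    by rewrite ht2; clear -hzn; lia.
  exists (n - (z + m)); first by clear -ht hzm; lia.
  rewrite /plc pt /played /fc Ey nbP //; last by rewrite pt.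
  rewrite pt /near; apply/andP; split; last by clear; lia.
  apply/orP; right; apply/orP; left; clear -hMz; lia.
have hzK : z <= K by move: hMz hzm; rewrite /M; clear; lia.
have rk o : 1 <= o <= K -> pos (o + L) = o /\ o + L < n.
  move=> ho; split; last by clear -ho hL hKM; lia.
  rewrite /pos; case: eqVneq => [e|_]; first by move: ho; clear -e; lia.
  by case: ifP => h; [move: h ho; clear; lia | clear; lia].
case hpz : (played z).
  have hz1 : 1 <= z <= K by clear -hzm hzK; lia.
  have [e1 e2] := rk z hz1.
  by exists (z + L) => //; rewrite /plc e1 hpz /fc e1 Ey nbP // /near leq_addr.
move: hpz; rewrite /played (_ : (z == 0) = false); last by clear -hzm; lia.
rewrite (_ : (M + m < z) = false); last by clear -hMz; lia.
rewrite hzK /= => /negbFE /existsP[a' /andP[ha' hr]].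
have ha'K := isI_le ha'.
have ha1 : 1 <= a' <= K by clear -hr ha'K; lia.
have [e1 e2] := rk a' ha1.
have ha'n : a' < n by case/andP: ha'.
exists (a' + L) => //; rewrite /plc e1 played_isI //= /fc e1 Ey nbP //.
by rewrite /near; clear -hr; lia.
Qed.

Lemma c_fsub v : v \in I -> exists2 t, t < n & plc t && (fc t == v).
Proof.
move=> hv; have hL := hL; have [hKM hmM] := KM.
set z := off a v; have hz : z < n by apply: off_lt.
have hI : isI z by rewrite /isI hz /z P_off hv.
have hzK := isI_le hI.
case: (eqVneq z 0) => [z0|zn0].
  exists 0 => //; rewrite pl0 /fc pos0 -z0 /z P_off eqxx //.
have pt : pos (z + L) = z.
  rewrite /pos; case: eqVneq => [e|_]; first by move: zn0; clear -e; lia.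
  by case: ifP => h; [move: h zn0; clear; lia | clear; lia].
exists (z + L); first by clear -hzK hKM hL; lia.
by rewrite /plc pt played_isI //= /fc pt /z P_off eqxx.
Qed.

Lemma c_lds : legal_dom_seq adj (pre fc plc n) /\ I_S adj (pre fc plc n) = I.
Proof.
apply: gen_lds.
- exact: c_finj.
- exact: c_fpriv.
- exact: c_fisI.
- exact: c_fcov.
- exact: c_fsub.
Qed.

Lemma pos_inj t1 t2 : t1 < n -> t2 < n -> pos t1 = pos t2 -> t1 = t2.
Proof.
move=> h1 h2 e; have hL := hL.
case: (pos_cases h1) => [[a1 b1]|[[a1 b1]|[a1 b1]]];
case: (pos_cases h2) => [[a2 b2]|[[a2 b2]|[a2 b2]]]; move: e; rewrite b1 b2;
clear -a1 a2 h1 h2 hL; lia.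
Qed.

Lemma pos_onto x : x < n -> exists2 t, t < n & pos t = x.
Proof.
move=> hx; have hL := hL.
case: (eqVneq x 0) => [->|nx]; first by exists 0.
case: (ltnP (M + m) x) => h.
  exists (n - x); first by clear -nx hx; lia.
  rewrite /pos; case: eqVneq => [e|_]; first by move: e hx; clear; lia.
  by case: ifP => h'; [clear -hx; lia | move: h'; clear -h hx hL; lia].
exists (x + L); first by clear -h hL; lia.
rewrite /pos; case: eqVneq => [e|_]; first by move: e nx; clear; lia.
by case: ifP => h'; [move: h'; clear -nx; lia | clear; lia].
Qed.

Lemma count_card (p : pred nat) : count p (iota 0 n) = #|[set o : 'I_n | p o]|.
Proof.
rewrite -val_enum_ord count_map cardsE cardE /enum_mem size_filter.
rewrite (@eq_filter _ _ predT) // filter_predT. by apply: eq_count.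
Qed.

Lemma size_pre : size (pre fc plc n) = n - #|[set o : 'I_n | ~~ played o]|.
Proof.
have -> : #|[set o : 'I_n | ~~ played o]| = count (predC played) (iota 0 n) by rewrite count_card.
rewrite /pre size_map size_filter.
have pe : perm_eq (map pos (iota 0 n)) (iota 0 n).
  apply: uniq_perm; last first.
  - move=> x; rewrite mem_iota add0n; apply/idP/idP => [hx'|hx].
      case/mapP: hx' => t; rewrite mem_iota => ht ->; exact: pos_lt.
    by have [t ht e] := pos_onto hx; apply/mapP; exists t; rewrite ?mem_iota.
  - exact: iota_uniq.
  rewrite map_inj_in_uniq ?iota_uniq // => x y; rewrite !mem_iota /=.
  exact: pos_inj.
have := (permP pe) played; rewrite count_map => ->.
have := count_predC played (iota 0 n); rewrite size_iota; clear; lia.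
Qed.

Lemma card_isI : #|[set o : 'I_n | isI o]| = #|I|.
Proof.
have -> : [set o : 'I_n | isI o] = (fun o : 'I_n => P a o) @^-1: I.
  by apply/setP => o; rewrite !inE /isI ltn_ord.
apply: card_preimset => x y /P_inj e; apply: val_inj; exact: e.
Qed.

Lemma unplayed_card : #|[set o : 'I_n | ~~ played o]| <= m * (#|I| - 1) + (M + m - K).
Proof.
set A' := [set o : 'I_n | isI o] :\ (ord0 : 'I_n).
set Bs := (fun j : 'I_(M + m - K) => (inord (K.+1 + j) : 'I_n)) @: [set: 'I_(M + m - K)].
set As := (fun p : 'I_n * 'I_m => (inord (p.1 - p.2.+1) : 'I_n)) @: setX A' [set: 'I_m].
have sub : [set o : 'I_n | ~~ played o] \subset As :|: Bs.
  apply/subsetP => o; rewrite inE /played negb_or negb_or => /and3P[h0 h1 h2].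
  rewrite in_setU; case: (ltnP K o) => hKo.
    apply/orP; right; apply/imsetP.
    have hj : o - K.+1 < M + m - K by clear -h1 hKo; lia.
    exists (Ordinal hj); first by rewrite inE.
    by apply: val_inj; rewrite /= inordK; [clear -hKo; lia | have := ltn_ord o; clear -hKo; lia].
  move: h2; rewrite hKo /= negbK => /existsP[a' /andP[ha' hr]].
  apply/orP; left; apply/imsetP.
  have hj : a' - o - 1 < m by clear -hr; lia.
  exists (a', Ordinal hj).
    rewrite in_setX in_setT andbT in_setD1 inE ha' andbT.
    apply/eqP => e; move: hr; rewrite e /=; clear; lia.
  apply: val_inj; rewrite /= inordK; first by clear -hr; lia.
  by have := ltn_ord o; clear -hr; lia.
have cA : #|As| <= #|A'| * m.
  by apply: (leq_trans (leq_imset_card _ _)); rewrite cardsX cardsT card_ord.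
have cB : #|Bs| <= M + m - K.
  by apply: (leq_trans (leq_imset_card _ _)); rewrite cardsT card_ord.
have cA' : #|A'| = #|I| - 1.
  rewrite -card_isI (cardsD1 (ord0 : 'I_n) [set o : 'I_n | isI o]) inE.
  rewrite (_ : isI ord0 = true) ?isI0 //= add1n subn1 //.
have := leq_trans (subset_leq_card sub) (leq_card_setU As Bs).
rewrite cA' mulnC in cA; clearbody As Bs A'; clear -cA cB; lia.
Qed.

Lemma size_lower :
  (if 2 <= #|I| then n - #|I| * m else n - 2 * m) <= size (pre fc plc n).
Proof.
rewrite size_pre; have hU := unplayed_card.
have [hKM hmM] := KM.
move: hU; set U := #|[set o : 'I_n | ~~ played o]| => hU.
case: ifP => hI.
  have hK0 : K != 0.
    apply/eqP => K0; move: hI; rewrite -card_isI.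
    have : [set o : 'I_n | isI o] \subset [set ord0].
      apply/subsetP => o; rewrite !inE => ho; apply/eqP/val_inj => /=.
      by have := isI_le ho; rewrite K0; clear; lia.
    by move/subset_leq_card; rewrite cards1; clear; lia.
  have [hf1 hf2] := isI_far isIK hK0.
  have hM : M = K by rewrite /M; apply/maxn_idPl; clear -hf1; lia.
  move: hU; rewrite hM; set k := #|I|.
  have : m * (k - 1) + m = k * m.
    by rewrite mulnBr muln1 subnK ?leq_pmulr 1?mulnC //; clear -hI; lia.
  clearbody U k; clear -hI; lia.
have : m * (#|I| - 1) = 0.
  by rewrite (_ : #|I| - 1 = 0) ?muln0 //; clear -hI; lia.
move: hU; rewrite /M; clearbody U; clear -hI; lia.
Qed.
End Cons.
End Cyc.

Theorem lemma5 (n m : nat) (I : {set 'I_n}) :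
  0 < n -> 0 < m -> 2 * (m + 1) <= n ->
  I != set0 -> independent (cyc_pow_adj n m) I ->
  gamma_gr (cyc_pow_adj n m) I =
    Some (if 2 <= #|I| then n - #|I| * m else n - 2 * m).
Proof.
case: n I => [//|n'] I _ hm hn hI0 hind.
have [a haI] := set0Pn _ hI0.
have hI1 : 0 < #|I| by rewrite card_gt0.
have ha0 : P a (@ord0 n') \in I by rewrite P0.
case: (@arg_maxnP _ (@ord0 n') (fun o : 'I_n'.+1 => P a o \in I) (fun o => val o) ha0)
  => K hK hmax.
have hKmax : forall o, o < n'.+1 -> P a o \in I -> o <= K.
  by move=> o ho hoI; exact: (hmax (Ordinal ho)).
have [hleg hIS] := c_lds hm hn haI hind (ltn_ord K) hK hKmax.
have hlow := size_lower hn haI hind (ltn_ord K) hK hKmax.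
set S := pre _ _ _ in hleg hIS hlow.
have [u1 u2] := upper hm hn hleg; rewrite hIS in u1.
set tg := (if 2 <= #|I| then n'.+1 - #|I| * m else n'.+1 - 2 * m) in hlow *.
have hsz : size S = tg.
  apply/eqP; rewrite eqn_leq hlow andbT /tg.
  move: u1 u2; set sz := size S; set c := #|I|; clearbody sz c; case: ifP => h; clear -h hI1; lia.
have hl : has_lds (cyc_pow_adj n'.+1 m) I tg.
  apply/existsP; exists (@Tuple tg _ S (introT eqP hsz)).
  by rewrite /= hleg hIS eqxx.
have htg : tg < #|'I_n'.+1|.+1.
  by rewrite card_ord /tg; case: ifP => h; clear; lia.
rewrite /gamma_gr (_ : [exists k : 'I_#|'I_n'.+1|.+1, has_lds _ I k] = true); last first.
  by apply/existsP; exists (Ordinal htg).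
congr Some; apply/eqP; rewrite eqn_leq; apply/andP; split.
  apply/bigmax_leqP => k /existsP[t /andP[hl' /eqP hI']].
  have [w1 w2] := upper hm hn hl'; rewrite hI' size_tuple in w1 w2.
  move: w1 w2; rewrite /tg; set c := #|I|; clearbody c; case: ifP => h; clear -h hI1; lia.
exact: (leq_bigmax_cond (Ordinal htg) hl).
Qed.
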